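(* Consider minibatch SGD with momentum $\mu\in[0,1)$ and symmetric positive-definite preconditioning matrix $\Lambda$ on linear regression with label noise, in the limit $N\to\infty$, and assume $[\Lambda,A]:=\Lambda A-A\Lambda=0$. Define $G_\mu:=2(1-\mu)I_D-\left(\frac{1-\mu}{1+\mu}+\frac1S\right)\Lambda A$ and $\kappa_\mu:=\frac{\mathrm{Tr}[\Lambda AG_\mu^{-1}]}{1-\frac1S\mathrm{Tr}[\Lambda AG_\mu^{-1}]}$ (with $G_\mu$ invertible and the denominator nonzero). Then the asymptotic fluctuation of the parameters is $$\Sigma=\frac{\sigma^2}{S}\left(1+\frac{\kappa_\mu}{S}\right)\Lambda G_\mu^{-1}.$$
   Context: Data: $x_i\in\mathbb{R}^D$ i.i.d. $\mathcal N(0,A)$, $A$ symmetric positive definite; $y_i=\mathbf{u}^{\mathrm T}x_i+\epsilon_i$ with $\epsilon_i$ i.i.d., independent of the $x_i$, mean $0$, variance $\sigma^2$; loss $L(\mathbf{w})=\frac{1}{2N}\sum_i(\mathbf{w}^{\mathrm T}x_i-y_i)^2$ (Hessian $H=A$ as $N\to\infty$). SGD with momentum: $\hat{\mathbf{g}}_t=\frac1S\sum_{i\in B_t}\nabla\ell_i(\mathbf{w}_{t-1})$, $\mathbf{m}_t=\mu\mathbf{m}_{t-1}+\hat{\mathbf{g}}_t$, $\mathbf{w}_t=\mathbf{w}_{t-1}-\Lambda\mathbf{m}_t$, with batch size $S$. The asymptotic fluctuation is $\Sigma:=\lim_{t\to\infty}\mathbb{E}[(\mathbf{w}_t-\mathbf{u})(\mathbf{w}_t-\mathbf{u})^{\mathrm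 T}]$; it is characterized by the matrix equation $(1-\mu)(\Lambda H\Sigma+\Sigma H\Lambda)-\frac{1+\mu^2}{1-\mu^2}\Lambda H\Sigma H\Lambda+\frac{\mu}{1-\mu^2}(\Lambda H\Lambda H\Sigma+\Sigma H\Lambda H\Lambda)=\Lambda C\Lambda$ with $H=A$, where $C$ is the stationary averaged minibatch noise covariance, which in this setting equals $C=\frac1S(A\Sigma A+\mathrm{Tr}[A\Sigma]A+\sigma^2A)$. *)

(* Defs.v *)
From mathcomp Require Import all_boot all_order all_algebra.
Set Implicit Arguments. Unset Strict Implicit. Unset Printing Implicit Defensive.
Import Order.TTheory GRing.Theory Num.Theory.
Local Open Scope ring_scope.

Section Defs.
Variables (R : realFieldType) (D : nat).

Definition posdef (M : 'M[R]_D) : Prop :=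
  M^T = M /\ forall v : 'cV[R]_D, v != 0 -> 0 < (v^T *m M *m v) 0 0.

Definition G_mu (mu : R) (S : nat) (Lam A : 'M[R]_D) : 'M[R]_D :=
  (2 * (1 - mu))%:M - ((1 - mu) / (1 + mu) + (S%:R)^-1) *: (Lam *m A).

Definition tau_mu (mu : R) (S : nat) (Lam A : 'M[R]_D) : R :=
  \tr (Lam *m A *m invmx (G_mu mu S Lam A)).

Definition kappa_mu (mu : R) (S : nat) (Lam A : 'M[R]_D) : R :=
  tau_mu mu S Lam A / (1 - (S%:R)^-1 * tau_mu mu S Lam A).

(* stationary averaged minibatch noise covariance (N -> oo, label-noise variance sigma2):
   C = (1/S) (A Sigma A + Tr[A Sigma] A + sigma^2 A) *)
Definition noise_cov (S : nat) (A : 'M[R]_D) (sigma2 : R) (Sig : 'M[R]_D) : 'M[R]_D :=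
  (S%:R)^-1 *: (A *m Sig *m A + \tr (A *m Sig) *: A + sigma2 *: A).

(* The matrix equation characterizing the asymptotic fluctuation Sigma,
   with Hessian H = A. *)
Definition fluctuation_eq (mu : R) (S : nat) (Lam A : 'M[R]_D) (sigma2 : R)
    (Sig : 'M[R]_D) : Prop :=
  let H := A in
  (1 - mu) *: (Lam *m H *m Sig + Sig *m H *m Lam)
  - ((1 + mu ^+ 2) / (1 - mu ^+ 2)) *: (Lam *m H *m Sig *m H *m Lam)
  + (mu / (1 - mu ^+ 2)) *: (Lam *m H *m Lam *m H *m Sig + Sig *m H *m Lam *m H *m Lam)
  = Lam *m noise_cov S A sigma2 Sig *m Lam.

End Defs.

(* Main.v *)
Require Import Defs.
From mathcomp Require Import all_boot all_order all_algebra.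
From mathcomp Require Import ring lra.
Import Order.TTheory GRing.Theory Num.Theory.
Local Open Scope ring_scope.

Lemma posdef_unit (R : realFieldType) (D : nat) (A : 'M[R]_D) :
  posdef A -> A \in unitmx.
Proof.
case=> AT Apos; rewrite unitmxE unitfE; apply/negP => /det0P [v v0 vA].
have w0 : v^T != 0.
  by apply: contra v0 => /eqP h; apply/eqP; rewrite -(trmxK v) h trmx0.
have := Apos _ w0; rewrite trmxK vA mul0mx mxE; lra.
Qed.

Lemma key (R : realFieldType) (D S : nat) (mu sigma2 : R) (A Lam Sig : 'M[R]_D) :
  (0 < S)%N -> mu < 1 -> 0 <= mu ->
  Lam *m A = A *m Lam -> Sig *m A = A *m Sig -> Sig *m Lam = Lam *m Sig ->
  fluctuation_eq mu S Lam A sigma2 Sig <->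
  Lam *m A *m (G_mu mu S Lam A *m Sig) =
    ((S%:R)^-1 * (\tr (A *m Sig) + sigma2)) *: (Lam *m A *m Lam).
Proof.
move=> S0 mu1 mu0 hLA hSA hSL.
set M := Lam *m A.
have e1 : Sig *m A *m Lam = M *m Sig.
  by rewrite hSA -mulmxA hSL mulmxA -hLA.
have e4 : Sig *m A *m Lam *m A *m Lam = M *m M *m Sig.
  by rewrite e1 -!mulmxA (mulmxA Sig) e1 !mulmxA.
have e2 : Lam *m A *m Sig *m A *m Lam = M *m M *m Sig.
  by rewrite -!mulmxA (mulmxA Sig) e1 !mulmxA.
have e3 : Lam *m A *m Lam *m A *m Sig = M *m M *m Sig by rewrite /M !mulmxA.
have eG : M *m (G_mu mu S Lam A *m Sig) =
   (2 * (1 - mu)) *: (M *m Sig) - ((1 - mu) / (1 + mu) + (S%:R)^-1) *: (M *m M *m Sig).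
  rewrite /G_mu mulmxBl mulmxBr mul_scalar_mx -!scalemxAl -!scalemxAr /M !mulmxA.
  by [].
have eR : Lam *m noise_cov S A sigma2 Sig *m Lam =
   (S%:R)^-1 *: (M *m M *m Sig + (\tr (A *m Sig) + sigma2) *: (M *m Lam)).
  rewrite /noise_cov -scalemxAr -scalemxAl !mulmxDr !mulmxDl -!scalemxAr -!scalemxAl.
  rewrite !mulmxA e2 /M scalerDl addrA.
  by rewrite !mulmxA.
rewrite /fluctuation_eq eR eG e4 e2 e3 e1 -/M.
move: (M *m M *m Sig) => Y; move: (M *m Sig) => X; move: (M *m Lam) => Z.
have hS : (S%:R : R) != 0 by rewrite pnatr_eq0 -lt0n.
have h1 : 1 - mu ^+ 2 != 0 by apply/eqP; nra.
have h2 : 1 + mu != 0 by apply/eqP; nra.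
split=> /matrixP h; apply/matrixP => i j; move: (h i j); rewrite !mxE => {}h.
- move/eqP: h; rewrite -subr_eq0 => /eqP h; apply/eqP; rewrite -subr_eq0; apply/eqP.
  rewrite -h. field. by rewrite h1 h2 hS.
- move/eqP: h; rewrite -subr_eq0 => /eqP h; apply/eqP; rewrite -subr_eq0; apply/eqP.
  rewrite -h. field. by rewrite h1 h2 hS.
Qed.

Theorem theorem1 (R : realFieldType) (D S : nat) (mu sigma2 : R)
    (A Lam : 'M[R]_D) :
  (0 < S)%N ->
  0 <= mu -> mu < 1 ->
  0 <= sigma2 ->
  posdef A -> posdef Lam ->
  Lam *m A = A *m Lam ->
  G_mu mu S Lam A \in unitmx ->
  1 - (S%:R)^-1 * tau_mu mu S Lam A != 0 ->
  let Sigma := (sigma2 / S%:R * (1 + kappa_mu mu S Lam A / S%:R))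
                 *: (Lam *m invmx (G_mu mu S Lam A)) in
  fluctuation_eq mu S Lam A sigma2 Sigma /\
  (forall Sig : 'M[R]_D,
     fluctuation_eq mu S Lam A sigma2 Sig ->
     Sig *m A = A *m Sig -> Sig *m Lam = Lam *m Sig ->
     Sig = Sigma).
Proof.
move=> S0 mu0 mu1 s0 pA pL hLA Gu hden Sigma.
have hS : (S%:R : R) != 0 by rewrite pnatr_eq0 -lt0n.
set G := G_mu mu S Lam A.
set Gi := invmx G.
have Mu : Lam *m A \in unitmx by rewrite unitmx_mul !posdef_unit.
have comm : forall X, X *m Lam = Lam *m X -> X *m A = A *m X -> X *m G = G *m X.
  move=> X h1 h2; rewrite /G /G_mu mulmxBl mulmxBr -scalemxAl -scalemxAr.
  rewrite scalar_mxC; congr (_ - _ *: _).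
  by rewrite mulmxA h1 -!mulmxA h2.
have commi : forall X, X *m G = G *m X -> X *m Gi = Gi *m X.
  move=> X h.
  by rewrite -{1}(mulKmx Gu (X *m Gi)) (mulmxA G X) -h -mulmxA mulmxV // mulmx1.
have GL : Lam *m G = G *m Lam by rewrite comm.
have GA : A *m G = G *m A by rewrite comm // hLA.
have GiL : Lam *m Gi = Gi *m Lam by rewrite commi.
have GiA : A *m Gi = Gi *m A by rewrite commi.
have trLG : \tr (A *m (Lam *m Gi)) = tau_mu mu S Lam A.
  by rewrite /tau_mu mulmxA -hLA.
have solve : forall c,
    c = (S%:R)^-1 * (c * tau_mu mu S Lam A + sigma2) ->
    fluctuation_eq mu S Lam A sigma2 (c *: (Lam *m Gi)).
  move=> c hc.
  have cL : (c *: (Lam *m Gi)) *m Lam = Lam *m (c *: (Lam *m Gi)).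
    by rewrite -scalemxAl -scalemxAr -mulmxA GiL !mulmxA.
  have cA : (c *: (Lam *m Gi)) *m A = A *m (c *: (Lam *m Gi)).
    by rewrite -scalemxAl -scalemxAr -mulmxA -GiA !mulmxA hLA.
  rewrite key // -(scalemxAr c A) mxtraceZ trLG.
  have -> : G_mu mu S Lam A *m (c *: (Lam *m Gi)) = c *: Lam.
    by rewrite -scalemxAr mulmxA -/G -GL -mulmxA mulmxV // mulmx1.
  by rewrite -scalemxAr -hc.
have hk : forall c, c * (1 - (S%:R)^-1 * tau_mu mu S Lam A) = sigma2 / S%:R ->
    c = sigma2 / S%:R * (1 + kappa_mu mu S Lam A / S%:R).
  rewrite /kappa_mu; move: (tau_mu mu S Lam A) hden => t ht c h.
  have ht' : S%:R - t != 0.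
    apply: contra ht => /eqP /subr0_eq <-.
    by rewrite mulVf // subrr.
  apply: (mulIf ht); rewrite h; field; by rewrite ht' hS.
split.
  apply: solve; apply/eqP; rewrite -subr_eq0; apply/eqP.
  rewrite /kappa_mu; move: (tau_mu mu S Lam A) hden => t ht.
  have ht' : S%:R - t != 0.
    apply: contra ht => /eqP /subr0_eq <-.
    by rewrite mulVf // subrr.
  field; by rewrite ht' hS.
move=> Sig fe hSA hSL.
have h := proj1 (key _ _ _ _ sigma2 _ _ _ S0 mu1 mu0 hLA hSA hSL) fe.
have [c hc] : exists c, c = (S%:R)^-1 * (\tr (A *m Sig) + sigma2) by eexists.
rewrite -hc in h.
have h2 := congr1 (mulmx (invmx (Lam *m A))) h.
rewrite -scalemxAr !mulKmx // in h2.
have hsig : Sig = c *: (Lam *m Gi).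
  rewrite -(mulKmx Gu Sig) h2 -scalemxAr -GiL //.
rewrite hsig in hc.
rewrite -(scalemxAr c A) mxtraceZ trLG in hc.
rewrite hsig /Sigma; congr (_ *: _); apply: hk.
rewrite mulrBr mulr1 {1}hc; field; by rewrite hS.
Qed.
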